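(* Let $\boldsymbol{x}\in\mathbb{R}^K$ have pairwise distinct entries, let $x_{\max}=\max_k x_k$ be attained at index $\max$, let $\epsilon\in\mathbb{R}$, and suppose the set $\mathcal{N}=\{n : \epsilon< x_n< x_{\max}\}$ is nonempty, with $N=|\mathcal{N}|$. For temperature $T>0$ define $$\mathcal{M}_T(\boldsymbol{x}) = 1-\frac{1}{N}\sum_{n\in\mathcal{N}}\big(\phi_T(\boldsymbol{x})_{\max}-\phi_T(\boldsymbol{x})_n\big).$$ Then the map $T\mapsto \mathcal{M}_T(\boldsymbol{x})$ is strictly increasing on $(0,\infty)$.
   Context: For $T>0$, the SoftMax with temperature $T$ is $\phi_T:\mathbb{R}^K\to\Delta^{K-1}$, $\phi_T(\boldsymbol{x})_i = \dfrac{e^{x_i/T}}{\sum_{k=1}^K e^{x_k/T}}$, where $\Delta^{K-1}=\{\boldsymbol{p}\in\mathbb{R}^K_{\ge 0}: \sum_k p_k=1\}$. The quantity $\mathcal{M}_T$ is the paper's ''multi-modality metric'' applied to $\phi_T$. *)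

(* Defs.v *)
From HB Require Import structures.
From mathcomp Require Import all_boot all_order all_algebra.
From mathcomp Require Import all_classical all_reals all_analysis.
Set Implicit Arguments. Unset Strict Implicit. Unset Printing Implicit Defensive.
Import Order.TTheory GRing.Theory Num.Theory.
Local Open Scope ring_scope.

Definition softmax (R : realType) (K : nat) (T : R) (x : 'I_K -> R) (i : 'I_K) : R :=
  expR (x i / T) / \sum_(k < K) expR (x k / T).

Definition Nset (R : realType) (K : nat) (x : 'I_K -> R) (eps : R) (imax : 'I_K)
  : {set 'I_K} := [set n : 'I_K | (eps < x n) && (x n < x imax)].

Definition multimodality (R : realType) (K : nat) (T : R) (x : 'I_K -> R)
  (eps : R) (imax : 'I_K) : R :=
  1 - (#|Nset x eps imax|%:R)^-1 *
      \sum_(n in Nset x eps imax) (softmax T x imax - softmax T x n).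

(* Main.v *)
Require Import Defs.
From HB Require Import structures.
From mathcomp Require Import all_boot all_order all_algebra.
From mathcomp Require Import all_classical all_reals all_analysis.
From mathcomp Require Import ring lra.
Import Order.TTheory GRing.Theory Num.Theory.
Local Open Scope ring_scope.

Lemma softmax_diff (R : realType) (K : nat) (x : 'I_K -> R) (imax n : 'I_K) (T : R) :
  0 < T ->
  softmax T x imax - softmax T x n =
  (1 - expR (- (x imax - x n) / T)) / \sum_(k < K) expR (- (x imax - x k) / T).
Proof.
move=> T0.
have E : forall k, expR (x k / T) = expR (x imax / T) * expR (- (x imax - x k) / T).
  move=> k; rewrite -expRD; congr expR.
  have T0' : T != 0 by rewrite gt_eqF.
  by field.
rewrite /softmax.
have S0 : 0 < \sum_(k < K) expR (- (x imax - x k) / T).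
  rewrite (bigD1 imax) //= subrr oppr0 mul0r expR0.
  apply: (lt_le_trans ltr01); rewrite lerDl; apply: sumr_ge0 => k _.
  exact: ltW (expR_gt0 _).
have e0 := expR_gt0 (x imax / T).
have -> : \sum_(k < K) expR (x k / T) =
   expR (x imax / T) * \sum_(k < K) expR (- (x imax - x k) / T).
  by rewrite mulr_sumr; apply: eq_bigr => k _; rewrite E.
rewrite (E n).
field.
by rewrite andbC; apply/andP; split; rewrite gt_eqF.
Qed.

Lemma ratio_lt (R : realType) (a1 a2 b1 b2 : R) :
  0 < a2 -> a2 <= a1 -> 0 < b1 -> b1 < b2 -> a2 / b2 < a1 / b1.
Proof.
move=> a2p a21 b1p b12.
have b2p : 0 < b2 by apply: lt_trans b12.
rewrite ltr_pdivrMr // mulrAC ltr_pdivlMr //.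
nra.
Qed.

Theorem mainTheorem3 (R : realType) (K : nat) (x : 'I_K -> R) (imax : 'I_K)
  (eps : R) :
  injective x ->
  (forall k : 'I_K, x k <= x imax) ->
  Nset x eps imax != finset.set0 ->
  forall T1 T2 : R, 0 < T1 -> T1 < T2 ->
    multimodality T1 x eps imax < multimodality T2 x eps imax.
Proof.
move=> _ Hmax /set0Pn [n0 Hn0] T1 T2 T1p T12.
have T2p : 0 < T2 by apply: lt_trans T12.
have Hd : forall d : R, 0 <= d -> expR (- d / T1) <= expR (- d / T2).
  move=> d d0; rewrite ler_expR !mulNr lerN2.
  by rewrite ler_pdivrMr // mulrAC ler_pdivlMr //; nra.
have Hs : forall d : R, 0 < d -> expR (- d / T1) < expR (- d / T2).
  move=> d d0; rewrite ltr_expR !mulNr ltrN2.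
  by rewrite ltr_pM2l // ltf_pV2 ?posrE.
rewrite /multimodality ltrD2l ltrN2.
have Np : 0 < #|Nset x eps imax|%:R :> R.
  rewrite ltr0n; apply/card_gt0P; by exists n0.
rewrite ltr_pM2l ?invr_gt0 //.
apply: ltr_sum.
  by apply/hasP; exists n0 => //; rewrite mem_index_enum.
move=> n Hn.
have dn : 0 < x imax - x n by move: Hn; rewrite inE subr_gt0 => /andP [_ ->].
have d0 : 0 < x imax - x n0 by move: Hn0; rewrite inE subr_gt0 => /andP [_ ->].
rewrite !softmax_diff //.
apply: ratio_lt.
- rewrite subr_gt0 -expR0 ltr_expR mulNr oppr_lt0 divr_gt0 //.
- by rewrite lerD2l lerN2; apply: Hd; apply: ltW.
- rewrite (bigD1 imax) //= subrr oppr0 mul0r expR0.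
  apply: (lt_le_trans ltr01); rewrite lerDl; apply: sumr_ge0 => k _.
  exact: ltW (expR_gt0 _).
- rewrite (bigD1 n0) //= [X in _ < X](bigD1 n0) //=.
  apply: ltr_leD; first exact: Hs.
  apply: ler_sum => k _; apply: Hd; rewrite subr_ge0; exact: Hmax.
Qed.
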